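(* There is an absolute constant $C$ such that for every simple temporal clique on $n$ vertices and every backward fireworks cover $S^+_T$ of it (for any outcome of the arbitrary choices in the construction), $|S^+_T|\le \frac{3}{4}\binom{n}{2}+Cn$.
   Context: A simple temporal clique is a pair $\mathcal{G}=(G,\lambda)$ where $G=(V,E)$ is the complete graph on a finite set $V$ of $n$ vertices and $\lambda:E\to\mathbb{N}$ assigns to each edge a single integer label such that any two distinct edges sharing an endpoint have different labels; the label of an arc $(x,y)$ is $\lambda(\{x,y\})$. For a vertex $v$, $e^+(v)$ is the edge incident to $v$ with largest label. Backward construction: let $E^+$ be the set of arcs $(v,u)$ with $\{u,v\}=e^+(v)$, except that if $e^+(u)=e^+(v)=\{u,v\}$ only one of the two arcs $(u,v),(v,u)$ is included (arbitrarily). Initialize $E^+_T:=E^+$. For every vertex $v$ of in-degree at least $2$ in $(V,E^+)$, let $(u_1,v),\dots,(u_\ell,v)$ be its in-arcs in $E^+$, where $(u_\ell,v)$ has the smallest label; for each $i<\ell$, if $u_i$ has in-degree $0$ in $(V,E^+)$, replace $(u_i,v)$ by $(v,u_i)$ in $E^+_T$, and otherwise remove $(u_i,v)$ from $E^+_T$. A collector is a vertex of in-degree $0$ in $(V,E^+_T)$. The backward fireworks cover is $S^+_T=\{\{u,v\}\in E:(u,v)\in E^+_T\}\cup\{\{u,v\}\in E: u \text{ is a collector}\}$. *)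

(* Defs.v *)
From mathcomp Require Import all_boot.
Set Implicit Arguments. Unset Strict Implicit. Unset Printing Implicit Defensive.

Section Fireworks.
Variable V : finType.

(* A simple temporal clique on the complete graph with vertex set V:
   lam x y is the label of the edge {x,y} (for x != y), symmetric, and
   two distinct edges sharing an endpoint have different labels. *)
Definition simple_temporal_clique (lam : V -> V -> nat) : Prop :=
  (forall x y, lam x y = lam y x) /\
  (forall x y z, x != y -> x != z -> y != z -> lam x y != lam x z).

(* p v is the other endpoint of e^+(v), the edge at v with largest label
   (unique by local injectivity of lam). *)
Definition is_eplus (lam : V -> V -> nat) (p : V -> V) : Prop :=
  forall v, p v != v /\ (forall w, w != v -> lam v w <= lam v (p v)).

(* A is a valid choice of E^+: the arcs (v, p v), except that for a mutual
   pair (p (p v) = v) exactly one of the two opposite arcs is kept. *)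
Definition is_Eplus (p : V -> V) (A : {set V * V}) : Prop :=
  [/\ (forall a, a \in A -> a.2 = p a.1),
      (forall v, ((v, p v) \in A) || ((p v, v) \in A)) &
      (forall u v, (u, v) \in A -> (v, u) \notin A)].

Definition indeg (B : {set V * V}) (v : V) : nat := #|[set u | (u, v) \in B]|.

Definition min_in_arc (lam : V -> V -> nat) (A : {set V * V}) (u v : V) : bool :=
  [forall w, ((w, v) \in A) ==> (lam u v <= lam w v)].

Definition ET (lam : V -> V -> nat) (A : {set V * V}) : {set V * V} :=
  [set a in A | (indeg A a.2 < 2) || min_in_arc lam A a.1 a.2]
  :|: [set (a.2, a.1) | a in [set a in A | [&& 2 <= indeg A a.2,
                                              ~~ min_in_arc lam A a.1 a.2 &
                                              indeg A a.1 == 0]]].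

Definition collector (lam : V -> V -> nat) (A : {set V * V}) (u : V) : bool :=
  indeg (ET lam A) u == 0.

Definition backward_fireworks_cover (lam : V -> V -> nat) (A : {set V * V})
  : {set {set V}} :=
  [set [set a.1; a.2] | a in ET lam A]
  :|: [set [set a.1; a.2] | a in [set a : V * V | collector lam A a.1 & a.1 != a.2]].

End Fireworks.

(* Main.v *)
Require Import Defs.
From mathcomp Require Import all_boot.
From mathcomp Require Import zify.

Set Implicit Arguments. Unset Strict Implicit. Unset Printing Implicit Defensive.

Lemma bin2_double n : 2 * 'C(n, 2) = n * (n - 1).
Proof.
elim: n => [|n IH] //.
rewrite binS bin1; nia.
Qed.

Section Proof5.
Variable V : finType.
Variables (lam : V -> V -> nat) (p : V -> V) (A : {set V * V}).
Hypothesis Hc : simple_temporal_clique lam.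
Hypothesis Hp : is_eplus lam p.
Hypothesis HA : is_Eplus p A.

Lemma A_snd a : a \in A -> a.2 = p a.1.
Proof. by case: HA => H _ _; apply: H. Qed.

Lemma in_ET_min w v : (w, v) \in A -> min_in_arc lam A w v -> (w, v) \in ET lam A.
Proof. by move=> H1 H2; rewrite /ET in_setU inE /= H1 H2 orbT. Qed.

Lemma ET_in w v : (w, v) \in A -> exists u, (u, v) \in ET lam A.
Proof.
move=> H.
case: (@arg_minnP _ w (fun u => (u, v) \in A) (fun u => lam u v) H) => u Hu Hmin.
exists u; apply: in_ET_min => //.
by apply/forallP => x; apply/implyP => Hx; apply: Hmin.
Qed.

Lemma collector_noin u : collector lam A u -> forall w, (w, u) \notin A.
Proof.
move=> Hu w; apply/negP => H.
have [x Hx] := ET_in H.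
move: Hu; rewrite /collector /indeg => /eqP/card0_eq/(_ x).
by rewrite in_set Hx.
Qed.

Lemma collector_prop u : collector lam A u ->
  (u, p u) \in A /\ ((indeg A (p u) < 2) || min_in_arc lam A u (p u)).
Proof.
move=> Hu.
have Hno := collector_noin Hu.
have Hin : (u, p u) \in A.
  case: HA => _ H2 _; move: (H2 u); case/orP => // H.
  by move: (Hno (p u)); rewrite H.
split => //.
have Hdeg0 : indeg A u == 0.
  rewrite /indeg cards_eq0; apply/eqP/setP => w; rewrite !inE.
  by apply/negbTE.
case: (ltnP (indeg A (p u)) 2) => //= H2.
apply/negPn/negP => Hnm.
have Hr : (p u, u) \in ET lam A.
  rewrite /ET in_setU; apply/orP; right.
  apply/imsetP; exists (u, p u) => //.
  by rewrite inE /= Hin H2 Hnm Hdeg0.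
move: Hu; rewrite /collector /indeg => /eqP/card0_eq/(_ (p u)).
by rewrite in_set Hr.
Qed.

Lemma card_le1 (S : {set V}) x y : #|S| < 2 -> x \in S -> y \in S -> x = y.
Proof.
move=> Hs Hx Hy; apply/eqP/negPn/negP => Hxy.
have : #|[set x; y]| <= #|S|.
  apply: subset_leq_card; apply/subsetP => z; rewrite !inE.
  by case/orP => /eqP ->.
by rewrite cards2 Hxy; move: Hs; case: #|S| => [|[|]].
Qed.

Lemma collectors_half :
  #|[set u | collector lam A u]| <= #|~: [set u | collector lam A u]|.
Proof.
set K := [set u | collector lam A u].
have Hinj : {in K &, injective p}.
  move=> u u'; rewrite !inE => Hu Hu' Heq.
  have [H1 H1'] := collector_prop Hu.
  have [H2 H2'] := collector_prop Hu'.
  case: (ltnP (indeg A (p u)) 2) => Hd.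
    apply: (@card_le1 [set w | (w, p u) \in A]) => //; rewrite inE //.
    by rewrite Heq.
  move: H1'; rewrite ltnNge Hd /= => /forallP/(_ u')/implyP Hm1.
  move: H2'; rewrite -Heq ltnNge Hd /= => /forallP/(_ u)/implyP Hm2.
  have E : lam u (p u) = lam u' (p u).
    have Hm1' : lam u (p u) <= lam u' (p u) by apply: Hm1; rewrite Heq.
    have Hm2' := Hm2 H1.
    by apply/eqP; rewrite eqn_leq Hm1' Hm2'.
  apply/eqP/negPn/negP => Hne.
  case: Hc => Hsym Hinj.
  have Hpu : p u != u by case: (Hp u).
  have Hpu' : p u != u' by rewrite Heq; case: (Hp u').
  move: (Hinj (p u) u u' Hpu Hpu' Hne).
  by rewrite Hsym E Hsym eqxx.
rewrite -(card_in_imset Hinj); apply: subset_leq_card.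
apply/subsetP => v /imsetP [u Hu ->].
rewrite !inE; apply/negP => Hc'.
have Hu2 : collector lam A u by move: Hu; rewrite inE.
have [H1 _] := collector_prop Hu2.
by move: (collector_noin Hc' u); rewrite H1.
Qed.

Lemma card_A : #|A| <= #|V|.
Proof.
have : A \subset [set (v, p v) | v : V].
  apply/subsetP => -[x y] H; apply/imsetP; exists x => //.
  by rewrite -(A_snd H).
move/subset_leq_card => H; apply: leq_trans H _.
by apply: leq_trans (leq_imset_card _ _) _.
Qed.

Lemma card_ET : #|ET lam A| <= 2 * #|V|.
Proof.
rewrite /ET; apply: leq_trans (leq_card_setU _ _) _.
rewrite mul2n -addnn; apply: leq_add.
  apply: leq_trans card_A; apply: subset_leq_card; apply/subsetP => a.
  by rewrite inE => /andP[].
apply: leq_trans (leq_imset_card _ _) _.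
apply: leq_trans card_A; apply: subset_leq_card; apply/subsetP => a.
by rewrite inE => /andP[].
Qed.

Lemma card_cover : #|backward_fireworks_cover lam A| <=
  2 * #|V| + ('C(#|V|, 2) - 'C(#|~: [set u | collector lam A u]|, 2)).
Proof.
set K := [set u | collector lam A u].
rewrite /backward_fireworks_cover; apply: leq_trans (leq_card_setU _ _) _.
apply: leq_add.
  by apply: leq_trans (leq_imset_card _ _) card_ET.
set S2 := [set B : {set V} | #|B| == 2].
set D := [set B : {set V} | B \subset ~: K & #|B| == 2].
have HDS : D \subset S2 by apply/subsetP => B; rewrite !inE => /andP[].
have -> : 'C(#|V|, 2) - 'C(#|~: K|, 2) = #|S2 :\: D|.
  by rewrite cardsD (setIidPr HDS) cards_draws card_draws.
apply: subset_leq_card; apply/subsetP => B /imsetP [a].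
rewrite inE => /andP[Ha Hne] ->.
rewrite !inE cards2 Hne /= !andbT; apply/negP => /subsetP/(_ a.1).
by rewrite !inE eqxx /= Ha => /(_ isT).
Qed.

End Proof5.

Theorem theorem5 : exists C : nat,
  forall (V : finType) (lam : V -> V -> nat) (p : V -> V) (A : {set V * V}),
    simple_temporal_clique lam -> is_eplus lam p -> is_Eplus p A ->
    4 * #|backward_fireworks_cover lam A| <= 3 * 'C(#|V|, 2) + 4 * C * #|V|.
Proof.
exists 3 => V lam p A Hc Hp HA.
have H1 := card_cover lam HA.
have H2 := collectors_half Hc Hp HA.
set K := [set u | collector lam A u] in H1 H2.
have H3 := cardsC K.
have H4 := bin2_double #|V|.
have H5 := bin2_double #|~: K|.
set n := #|V| in H1 H3 H4 *.
set m := #|~: K| in H1 H2 H3 H5.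
set k := #|K| in H2 H3.
set c := #|backward_fireworks_cover lam A| in H1 *.
have Hsq : n * n <= 4 * (m * m) by nia.
nia.
Qed.
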